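(* Let $H$ be an infinite finitely generated amenable group and let $F_2$ be the free group on two generators. There exists a faithful, transitive action of $F_2$ by permutations on the set $H$ such that every $H$-invariant mean on $H$ is $F_2$-invariant.
   Context: A mean on $H$ is a finitely additive $\mu:2^H\to[0,1]$ with $\mu(H)=1$; it is $H$-invariant if $\mu(hA)=\mu(A)$ for all $h\in H$, $A\subseteq H$ (invariance under left multiplication), and $F_2$-invariant if $\mu(gA)=\mu(A)$ for all $g\in F_2$. Faithful means every nontrivial element of $F_2$ moves some point. *)

(* Defs.v *)
From Stdlib Require Import Reals List.
Open Scope R_scope.

Definition is_group {H : Type} (mul : H -> H -> H) (one : H) (inv : H -> H) : Prop :=
  (forall x y z, mul (mul x y) z = mul x (mul y z)) /\
  (forall x, mul one x = x) /\ (forall x, mul x one = x) /\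
  (forall x, mul (inv x) x = one) /\ (forall x, mul x (inv x) = one).

Definition infinite_type (H : Type) : Prop :=
  ~ exists l : list H, forall x : H, In x l.

Inductive generated {H : Type} (mul : H -> H -> H) (one : H) (inv : H -> H)
  (S : H -> Prop) : H -> Prop :=
| gen_base : forall x, S x -> generated mul one inv S x
| gen_one : generated mul one inv S one
| gen_mul : forall x y, generated mul one inv S x -> generated mul one inv S y ->
            generated mul one inv S (mul x y)
| gen_inv : forall x, generated mul one inv S x -> generated mul one inv S (inv x).

Definition finitely_generated {H : Type} (mul : H -> H -> H) (one : H) (inv : H -> H) : Prop :=
  exists l : list H, forall x, generated mul one inv (fun s => In s l) x.

Definition set_union {H : Type} (A B : H -> Prop) : H -> Prop := fun x => A x \/ B x.
Definition set_disjoint {H : Type} (A B : H -> Prop) : Prop := forall x, ~ (A x /\ B x).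
Definition set_full (H : Type) : H -> Prop := fun _ => True.
Definition image {H : Type} (f : H -> H) (A : H -> Prop) : H -> Prop :=
  fun y => exists x, A x /\ y = f x.

(** A mean on H: finitely additive mu : 2^H -> [0,1] with mu(H) = 1.
    (Since sets are predicates, we also require mu to depend only on the
    extension of the set, which is automatic for genuine sets.) *)
Definition is_mean {H : Type} (mu : (H -> Prop) -> R) : Prop :=
  (forall A B, (forall x, A x <-> B x) -> mu A = mu B) /\
  (forall A, 0 <= mu A <= 1) /\
  mu (set_full H) = 1 /\
  (forall A B, set_disjoint A B -> mu (set_union A B) = mu A + mu B).

Definition H_invariant_mean {H : Type} (mul : H -> H -> H) (mu : (H -> Prop) -> R) : Prop :=
  is_mean mu /\ forall (h : H) (A : H -> Prop), mu (image (mul h) A) = mu A.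

Definition amenable {H : Type} (mul : H -> H -> H) : Prop :=
  exists mu, H_invariant_mean mul mu.

(** The free group F_2 on generators a, b: elements are reduced words in the
    letters a, a^-1, b, b^-1.  A letter is (g, e) with g = true for a,
    g = false for b, and e = true for the inverse. *)
Definition letter := (bool * bool)%type.
Definition word := list letter.

Definition inverse_letters (l1 l2 : letter) : Prop :=
  fst l1 = fst l2 /\ snd l1 <> snd l2.

Fixpoint reduced (w : word) : Prop :=
  match w with
  | nil => True
  | l1 :: w' =>
      match w' with
      | nil => True
      | l2 :: _ => ~ inverse_letters l1 l2 /\ reduced w'
      end
  end.

(** An action of F_2 by permutations of H is (by the universal property of
    F_2) determined by two permutations pa, pb of H; we store each with its
    inverse. *)
Definition is_perm {H : Type} (p pinv : H -> H) : Prop :=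
  (forall x, p (pinv x) = x) /\ (forall x, pinv (p x) = x).

Definition act_letter {H : Type} (pa pai pb pbi : H -> H) (l : letter) : H -> H :=
  match l with
  | (true, false) => pa
  | (true, true) => pai
  | (false, false) => pb
  | (false, true) => pbi
  end.

Fixpoint act_word {H : Type} (pa pai pb pbi : H -> H) (w : word) (x : H) : H :=
  match w with
  | nil => x
  | l :: w' => act_letter pa pai pb pbi l (act_word pa pai pb pbi w' x)
  end.

Definition faithful_action {H : Type} (pa pai pb pbi : H -> H) : Prop :=
  forall w : word, reduced w -> w <> nil ->
    exists x : H, act_word pa pai pb pbi w x <> x.

Definition transitive_action {H : Type} (pa pai pb pbi : H -> H) : Prop :=
  forall x y : H, exists w : word, act_word pa pai pb pbi w x = y.

Definition F2_invariant {H : Type} (pa pai pb pbi : H -> H) (mu : (H -> Prop) -> R) : Prop :=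
  forall (w : word) (A : H -> Prop), mu (image (act_word pa pai pb pbi w) A) = mu A.

(* Main.v *)
Require Import Defs.
From Stdlib Require Import Reals List Lia Lra Arith.
From Stdlib Require Import Classical ClassicalEpsilon.
Import ListNotations.
Local Open Scope nat_scope.

Definition cdec (P : Prop) : {P} + {~P} := excluded_middle_informative P.

Lemma min_exists (P : nat -> Prop) : (exists n, P n) -> exists n, P n /\ forall m, P m -> n <= m.
Proof.
  intros [n0 Hn0].
  destruct (classic (exists n, P n /\ forall m, P m -> n <= m)) as [h|h]; [exact h|].
  exfalso.
  assert (forall n, ~ P n) as Hno.
  { intro n. induction n as [n IH] using lt_wf_ind. intro Pn.
    apply h. exists n. split; [exact Pn|]. intros m Pm.
    destruct (le_lt_dec n m) as [l|l]; [exact l|]. exfalso. exact (IH m l Pm). }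
  exact (Hno n0 Hn0).
Qed.

Section Main.
Context {H : Type} (mul : H -> H -> H) (one : H) (inv : H -> H).
Hypothesis HG : is_group mul one inv.

Lemma massoc x y z : mul (mul x y) z = mul x (mul y z). Proof. apply HG. Qed.
Lemma mone_l x : mul one x = x. Proof. apply HG. Qed.
Lemma mone_r x : mul x one = x. Proof. apply HG. Qed.
Lemma minv_l x : mul (inv x) x = one. Proof. apply HG. Qed.
Lemma minv_r x : mul x (inv x) = one. Proof. apply HG. Qed.

Lemma mcancel g x y : mul g x = mul g y -> x = y.
Proof.
  intro e. rewrite <- (mone_l x), <- (mone_l y), <- (minv_l g), !massoc, e. reflexivity.
Qed.

Lemma inv_inv x : inv (inv x) = x.
Proof.
  apply (mcancel (inv x)). rewrite minv_r, minv_l. reflexivity.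
Qed.

Lemma inv_mul x y : inv (mul x y) = mul (inv y) (inv x).
Proof.
  apply (mcancel (mul x y)). rewrite minv_r, massoc, <- (massoc y), minv_r, mone_l, minv_r.
  reflexivity.
Qed.

Lemma mul_inv_l g x : mul (inv g) (mul g x) = x.
Proof. rewrite <- massoc, minv_l, mone_l. reflexivity. Qed.
Lemma mul_inv_r g x : mul g (mul (inv g) x) = x.
Proof. rewrite <- massoc, minv_r, mone_l. reflexivity. Qed.

Definition prod (l : list H) : H := fold_right mul one l.

Lemma prod_app l1 l2 : prod (l1 ++ l2) = mul (prod l1) (prod l2).
Proof.
  induction l1 as [|s l IH]; simpl. - rewrite mone_l; reflexivity.
  - rewrite IH, massoc; reflexivity.
Qed.

Lemma prod_rev_inv l : prod (rev (map inv l)) = inv (prod l).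
Proof.
  induction l as [|s l IH]; simpl.
  - apply (mcancel one). rewrite minv_r, mone_l. reflexivity.
  - rewrite prod_app, IH. simpl. rewrite mone_r, inv_mul. reflexivity.
Qed.

Variable Sg : list H.
Hypothesis HS : forall x, generated mul one inv (fun s => In s Sg) x.

Definition S2 : list H := Sg ++ map inv Sg.

Lemma S2_inv s : In s S2 -> In (inv s) S2.
Proof.
  unfold S2. intro h. apply in_app_or in h. apply in_or_app. destruct h as [h|h].
  - right. apply in_map. exact h.
  - left. apply in_map_iff in h. destruct h as [t [<- ht]]. rewrite inv_inv. exact ht.
Qed.

Definition wd (l : list H) : Prop := forall s, In s l -> In s S2.

Lemma wd_app l1 l2 : wd l1 -> wd l2 -> wd (l1 ++ l2).
Proof. intros h1 h2 s hs. apply in_app_or in hs. destruct hs; auto. Qed.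

Lemma wd_cons s l : In s S2 -> wd l -> wd (s :: l).
Proof. intros h1 h2 t [<-|ht]; auto. Qed.

Lemma wd_rev_inv l : wd l -> wd (rev (map inv l)).
Proof.
  intros h s hs. apply in_rev in hs. apply in_map_iff in hs. destruct hs as [t [<- ht]].
  apply S2_inv, h, ht.
Qed.

Lemma gen_word x : exists l, wd l /\ x = prod l.
Proof.
  induction (HS x) as [x hx| |x y _ [l1 [h1 e1]] _ [l2 [h2 e2]]|x _ [l [h e]]].
  - exists [x]. split. + intros s [<-|[]]. unfold S2. apply in_or_app. left. exact hx.
    + simpl. rewrite mone_r. reflexivity.
  - exists []. split. + intros s []. + reflexivity.
  - exists (l1 ++ l2). split. + apply wd_app; assumption. + rewrite prod_app, e1, e2. reflexivity.
  - exists (rev (map inv l)). split. + apply wd_rev_inv, h. + rewrite prod_rev_inv, e. reflexivity.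
Qed.

Definition LP (x : H) (n : nat) : Prop := exists l, wd l /\ length l = n /\ x = prod l.

Lemma LP_ex x : exists n, LP x n /\ forall m, LP x m -> n <= m.
Proof.
  apply min_exists. destruct (gen_word x) as [l [h e]]. exists (length l), l. auto.
Qed.

Definition len (x : H) : nat := proj1_sig (constructive_indefinite_description _ (LP_ex x)).

Lemma len_spec x : LP x (len x).
Proof. exact (proj1 (proj2_sig (constructive_indefinite_description _ (LP_ex x)))). Qed.

Lemma len_min x l : wd l -> x = prod l -> len x <= length l.
Proof.
  intros h e. apply (proj2 (proj2_sig (constructive_indefinite_description _ (LP_ex x)))).
  exists l. auto.
Qed.

Lemma len_mul x y : len (mul x y) <= len x + len y.
Proof.
  destruct (len_spec x) as [l1 [h1 [n1 e1]]]. destruct (len_spec y) as [l2 [h2 [n2 e2]]].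
  rewrite <- n1, <- n2, <- length_app. apply len_min. apply wd_app; auto.
  rewrite prod_app, <- e1, <- e2. reflexivity.
Qed.

Lemma len_inv x : len (inv x) <= len x.
Proof.
  destruct (len_spec x) as [l [h [n e]]]. rewrite <- n.
  rewrite <- (length_map inv l), <- length_rev. apply len_min. apply wd_rev_inv, h.
  rewrite prod_rev_inv, e. reflexivity.
Qed.

Lemma len_one : len one = 0.
Proof. assert (len one <= 0) by (apply (len_min one []); [intros s [] | reflexivity]). lia. Qed.

Lemma len0 x : len x = 0 -> x = one.
Proof.
  intro h. destruct (len_spec x) as [l [_ [n e]]]. rewrite h in n. destruct l; [exact e|discriminate].
Qed.

Lemma len_gen s : In s S2 -> len s <= 1.
Proof. intro h. apply (len_min s [s]). intros t [<-|[]]; exact h. simpl; rewrite mone_r; reflexivity. Qed.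

Lemma len_mul_gen s x : In s S2 -> len (mul s x) <= S (len x).
Proof. intro h. pose proof (len_mul s x). pose proof (len_gen s h). lia. Qed.

Lemma par_ex x : 0 < len x -> exists y, len y = pred (len x) /\ exists s, In s S2 /\ x = mul s y.
Proof.
  intro hp. destruct (len_spec x) as [l [h [n e]]]. destruct l as [|s l]; [simpl in n; lia|].
  exists (prod l). assert (hl : wd l) by (intros t ht; apply h; right; exact ht).
  assert (In s S2) as hs by (apply h; left; reflexivity).
  split.
  - pose proof (len_min (prod l) l hl eq_refl). simpl in n.
    pose proof (len_mul_gen s (prod l) hs). simpl in e. rewrite <- e in H1. lia.
  - exists s. split; [exact hs| exact e].
Qed.

Definition par (x : H) : H :=
  match cdec (0 < len x) with
  | left h => proj1_sig (constructive_indefinite_description _ (par_ex x h))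
  | right _ => x
  end.

Lemma par_spec x : 0 < len x -> len (par x) = pred (len x) /\ exists s, In s S2 /\ x = mul s (par x).
Proof.
  intro h. unfold par. destruct (cdec _) as [h'|h']; [|contradiction].
  destruct (constructive_indefinite_description _ _) as [y hy]. exact hy.
Qed.


Fixpoint wordsUpTo (r : nat) : list (list H) :=
  match r with
  | 0 => [[]]
  | Datatypes.S r' => [] :: flat_map (fun s => map (cons s) (wordsUpTo r')) S2
  end.

Lemma wordsUpTo_in r l : wd l -> length l <= r -> In l (wordsUpTo r).
Proof.
  revert l. induction r as [|r IH]; intros l h hl.
  - destruct l; [left; reflexivity| simpl in hl; lia].
  - destruct l as [|s l]; [left; reflexivity|]. right. apply in_flat_map.
    exists s. split. + apply h. left; reflexivity.
    + apply in_map. apply IH. intros t ht; apply h; right; exact ht. simpl in hl; lia.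
Qed.

Definition ball r : list H := map prod (wordsUpTo r).

Lemma ball_in r x : len x <= r -> In x (ball r).
Proof.
  intro h. destruct (len_spec x) as [l [hw [hn e]]]. unfold ball. rewrite e. apply in_map.
  apply wordsUpTo_in; [exact hw| lia].
Qed.

Hypothesis Hinf : infinite_type H.

Lemma exists_len_ge n : exists x, n <= len x.
Proof.
  apply NNPP. intro h. apply Hinf. exists (ball n). intro x. apply ball_in.
  destruct (le_lt_dec n (len x)) as [l|l]; [exfalso; apply h; exists x; exact l| lia].
Qed.

Lemma len_par x : 0 < len x -> len (par x) = pred (len x).
Proof. intro h. exact (proj1 (par_spec x h)). Qed.

Lemma len_iter_par k x : k <= len x -> len (Nat.iter k par x) = len x - k.
Proof.
  induction k as [|k IH]; intro h; simpl. - lia.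
  - rewrite len_par; rewrite IH; lia.
Qed.

Lemma exists_len n : exists x, len x = n.
Proof.
  destruct (exists_len_ge n) as [x hx]. exists (Nat.iter (len x - n) par x).
  rewrite len_iter_par; lia.
Qed.

Definition L (i : nat) : nat := (i + 2) * (i + 2).

Definition e (i : nat) : H := proj1_sig (constructive_indefinite_description _ (exists_len (L i))).
Lemma len_e i : len (e i) = L i.
Proof. exact (proj2_sig (constructive_indefinite_description _ (exists_len (L i)))). Qed.

Lemma L_inj i j : L i = L j -> i = j.
Proof. unfold L. intro h. nia. Qed.

Lemma L_gap i j : i < j -> L i + 2 * i + 5 <= L j.
Proof. unfold L. intro h. nia. Qed.

Lemma L_not_m2 i j : L j <> L i - 2.
Proof.
  unfold L. intro h. destruct (le_lt_dec i j) as [l|l]; nia.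
Qed.

Lemma L_ge i : 4 <= L i.
Proof. unfold L. nia. Qed.

Lemma e_inj i j : e i = e j -> i = j.
Proof. intro h. apply L_inj. rewrite <- !len_e, h. reflexivity. Qed.

Lemma distinct_list k : exists l : list H, length l = k /\ NoDup l.
Proof.
  induction k as [|k [l [hl hn]]]. - exists []. split; [reflexivity| constructor].
  - assert (exists x, ~ In x l) as [x hx].
    { apply NNPP. intro h. apply Hinf. exists l. intro x. apply NNPP. intro h'. apply h. exists x; exact h'. }
    exists (x :: l). split; [simpl; lia| constructor; assumption].
Qed.


Definition leq_dec (l1 l2 : letter) : {l1 = l2} + {l1 <> l2}.
Proof. decide equality; apply Bool.bool_dec. Defined.

Definition linv (l : letter) : letter := (fst l, negb (snd l)).

Lemma linv_linv l : linv (linv l) = l.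
Proof. destruct l as [a b]; unfold linv; simpl; rewrite Bool.negb_involutive; reflexivity. Qed.

Lemma inverse_letters_iff l1 l2 : inverse_letters l1 l2 <-> l2 = linv l1.
Proof.
  destruct l1 as [a1 b1], l2 as [a2 b2]. unfold inverse_letters, linv; simpl. split.
  - intros [-> h]. destruct b1, b2; simpl; congruence.
  - intro h. inversion h; subst. split; [reflexivity| destruct b1; simpl; congruence].
Qed.

Definition actX (l : letter) (u : word) : word :=
  match u with
  | [] => if fst l then [l] else []
  | l' :: u' => if leq_dec l' (linv l) then u' else l :: u
  end.

Definition endA (u : word) : Prop :=
  match u with [] => True | _ => fst (last u (true, true)) = true end.

Definition RX (u : word) : Prop := reduced u /\ endA u.

Lemma reduced_tail l u : reduced (l :: u) -> reduced u.
Proof. destruct u; simpl; tauto. Qed.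

Lemma reduced_cons l u : reduced u -> (forall l2 u2, u = l2 :: u2 -> l2 <> linv l) -> reduced (l :: u).
Proof.
  intros h1 h2. destruct u as [|l2 u2]; simpl; [exact I|]. split; [|exact h1].
  rewrite inverse_letters_iff. apply (h2 l2 u2 eq_refl).
Qed.

Lemma endA_tail l u : u <> [] -> endA (l :: u) -> endA u.
Proof.
  intros hn h. destruct u as [|l2 u2]; [contradiction|]. unfold endA in *. exact h.
Qed.

Lemma endA_cons l u : u <> [] -> endA u -> endA (l :: u).
Proof.
  intros hn h. destruct u as [|l2 u2]; [contradiction|]. unfold endA in *. exact h.
Qed.

Lemma RX_tail l u : RX (l :: u) -> RX u.
Proof.
  intros [h1 h2]. split; [eapply reduced_tail; eauto|].
  destruct u; [exact I| eapply endA_tail; [discriminate| exact h2]].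
Qed.

Lemma RX_nil : RX [].
Proof. split; exact I. Qed.

Lemma actX_RX l u : RX u -> RX (actX l u).
Proof.
  intro h. destruct u as [|l' u']; simpl.
  - destruct (fst l) eqn:ef; [|exact RX_nil]. split; [exact I| simpl; exact ef].
  - destruct (leq_dec l' (linv l)) as [_|hne]; [eapply RX_tail; eauto|].
    destruct h as [h1 h2]. split.
    + apply reduced_cons; [exact h1|]. intros l2 u2 ee. inversion ee; subst. exact hne.
    + apply endA_cons; [discriminate| exact h2].
Qed.

Lemma actX_inv l u : RX u -> (u = [] -> fst l = true) -> actX (linv l) (actX l u) = u.
Proof.
  intros h hb. destruct u as [|l' u'].
  - simpl. rewrite (hb eq_refl). simpl. rewrite linv_linv.
    destruct (leq_dec l l) as [_|n]; [reflexivity| congruence].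
  - simpl. destruct (leq_dec l' (linv l)) as [el|hne].
    + subst l'. destruct u' as [|l'' u''].
      * destruct h as [_ h2]. simpl in h2. simpl. unfold linv in *. simpl in *. rewrite h2. reflexivity.
      * simpl. rewrite linv_linv. destruct (leq_dec l'' l) as [el|hne]; [|reflexivity].
        exfalso. subst l''. destruct h as [h1 _]. simpl in h1. destruct h1 as [h1 _]. apply h1.
        apply inverse_letters_iff. rewrite linv_linv. reflexivity.
    + simpl. rewrite linv_linv. destruct (leq_dec l l) as [_|n]; [reflexivity| congruence].
Qed.


Lemma actX_nonnil l u : RX u -> u <> [] -> fst l = false -> actX l u <> [].
Proof.
  intros h hn hf. destruct u as [|l' u']; [contradiction|]. simpl.
  destruct (leq_dec l' (linv l)) as [el|_]; [|discriminate].
  subst l'. destruct u' as [|l2 u2]; [|discriminate].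
  exfalso. destruct h as [_ h2]. simpl in h2. unfold linv in h2; simpl in h2. congruence.
Qed.

Lemma actX_build l u : RX (l :: u) -> actX l u = l :: u.
Proof.
  intro h. destruct u as [|l2 u2]; simpl.
  - destruct h as [_ h2]. simpl in h2. rewrite h2. reflexivity.
  - destruct (leq_dec l2 (linv l)) as [el|_]; [|reflexivity]. exfalso.
    destruct h as [[h1 _] _]. apply h1. apply inverse_letters_iff. exact el.
Qed.

Lemma actX_tail l u : actX (linv l) (l :: u) = u.
Proof. simpl. rewrite linv_linv. destruct (leq_dec l l) as [_|n]; [reflexivity| congruence]. Qed.

Definition lcode (l : letter) : nat :=
  match l with (false, false) => 1 | (false, true) => 2 | (true, false) => 3 | (true, true) => 4 end.

Fixpoint code (w : word) : nat :=
  match w with [] => 0 | l :: w' => lcode l + 5 * code w' end.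

Lemma lcode_range l : 1 <= lcode l <= 4.
Proof. destruct l as [[|] [|]]; simpl; lia. Qed.

Lemma lcode_inj l1 l2 : lcode l1 = lcode l2 -> l1 = l2.
Proof. destruct l1 as [[|] [|]], l2 as [[|] [|]]; simpl; intro h; try reflexivity; discriminate. Qed.

Lemma code_inj w1 w2 : code w1 = code w2 -> w1 = w2.
Proof.
  revert w2. induction w1 as [|l1 w1 IH]; intros [|l2 w2]; simpl; intro h.
  - reflexivity.
  - pose proof (lcode_range l2); lia.
  - pose proof (lcode_range l1); lia.
  - pose proof (lcode_range l1); pose proof (lcode_range l2).
    assert (lcode l1 = lcode l2 /\ code w1 = code w2) as [h1 h2] by lia.
    rewrite (lcode_inj _ _ h1), (IH _ h2). reflexivity.
Qed.

Definition iota (u : word) : H := e (code u).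

Lemma iota_inj u v : iota u = iota v -> u = v.
Proof. intro h. apply code_inj, e_inj, h. Qed.

Definition E (h : H) : Prop := exists u, RX u /\ h = iota u.

Definition getu (h : H) : word :=
  match cdec (E h) with
  | left p => proj1_sig (constructive_indefinite_description _ p)
  | right _ => []
  end.

Lemma getu_spec h : E h -> RX (getu h) /\ h = iota (getu h).
Proof.
  intro p. unfold getu. destruct (cdec (E h)) as [p'|n]; [|contradiction].
  exact (proj2_sig (constructive_indefinite_description _ p')).
Qed.

Lemma E_iota u : RX u -> E (iota u).
Proof. intro h. exists u. auto. Qed.

Lemma getu_iota u : RX u -> getu (iota u) = u.
Proof.
  intro h. destruct (getu_spec (iota u) (E_iota u h)) as [_ e1]. symmetry. apply iota_inj. exact e1.
Qed.

Lemma E_len h : E h -> exists i, len h = L i.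
Proof. intros [u [_ ->]]. exists (code u). apply len_e. Qed.

Lemma one_notE : ~ E one.
Proof. intro h. destruct (E_len one h) as [i hi]. rewrite len_one in hi. pose proof (L_ge i). lia. Qed.


Definition heq (x y : H) : {x = y} + {x <> y} := cdec (x = y).

Fixpoint idx (l : list H) (x : H) : nat :=
  match l with [] => 0 | y :: l' => if heq y x then 0 else Datatypes.S (idx l' x) end.

Lemma idx_lt l x : In x l -> idx l x < length l.
Proof.
  induction l as [|y l IH]; simpl; [intros []|]. intros [<-|h].
  - destruct (heq y y) as [_|n]; [lia| congruence].
  - destruct (heq y x); [lia|]. specialize (IH h). lia.
Qed.

Lemma nth_idx l x d : In x l -> nth (idx l x) l d = x.
Proof.
  induction l as [|y l IH]; simpl; [intros []|]. intro h.
  destruct (heq y x) as [ee|n]; [exact ee|]. destruct h as [h|h]; [congruence|]. apply IH, h.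
Qed.

Lemma idx_nth l i d : NoDup l -> i < length l -> idx l (nth i l d) = i.
Proof.
  revert i. induction l as [|y l IH]; intros i hn hi; simpl in hi; [lia|].
  inversion hn as [|y' l' hy hn']; subst. destruct i as [|i]; simpl.
  - destruct (heq y y) as [_|n]; [reflexivity| congruence].
  - destruct (heq y (nth i l d)) as [ee|_].
    + exfalso. apply hy. rewrite ee. apply nth_In. lia.
    + rewrite IH; [reflexivity| exact hn'| lia].
Qed.

Definition nidx (n i : nat) : nat := if Nat.ltb (Datatypes.S i) n then Datatypes.S i else 0.
Definition pidx (n i : nat) : nat := match i with 0 => n - 1 | Datatypes.S i' => i' end.

Definition nxt (l : list H) (x : H) : H :=
  match cdec (In x l) with left _ => nth (nidx (length l) (idx l x)) l x | right _ => x end.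
Definition prv (l : list H) (x : H) : H :=
  match cdec (In x l) with left _ => nth (pidx (length l) (idx l x)) l x | right _ => x end.

Lemma nidx_lt n i : i < n -> nidx n i < n.
Proof. unfold nidx. intro h. destruct (Nat.ltb_spec (Datatypes.S i) n); lia. Qed.
Lemma pidx_lt n i : i < n -> pidx n i < n.
Proof. unfold pidx. intro h. destruct i; lia. Qed.
Lemma pidx_nidx n i : i < n -> pidx n (nidx n i) = i.
Proof. unfold nidx, pidx. intro h. destruct (Nat.ltb_spec (Datatypes.S i) n); lia. Qed.
Lemma nidx_pidx n i : i < n -> nidx n (pidx n i) = i.
Proof. unfold nidx, pidx. intro h. destruct i as [|i]; [destruct (Nat.ltb_spec (Datatypes.S (n-1)) n) | destruct (Nat.ltb_spec (Datatypes.S i) n)]; lia. Qed.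

Lemma nxt_in l x : In x l -> In (nxt l x) l.
Proof.
  intro h. unfold nxt. destruct (cdec (In x l)) as [_|n]; [|contradiction].
  apply nth_In, nidx_lt, idx_lt, h.
Qed.
Lemma prv_in l x : In x l -> In (prv l x) l.
Proof.
  intro h. unfold prv. destruct (cdec (In x l)) as [_|n]; [|contradiction].
  apply nth_In, pidx_lt, idx_lt, h.
Qed.

Lemma nxt_eq l x d : In x l -> nxt l x = nth (nidx (length l) (idx l x)) l d.
Proof.
  intro h. unfold nxt. destruct (cdec (In x l)) as [_|n]; [|contradiction].
  apply nth_indep, nidx_lt, idx_lt, h.
Qed.
Lemma prv_eq l x d : In x l -> prv l x = nth (pidx (length l) (idx l x)) l d.
Proof.
  intro h. unfold prv. destruct (cdec (In x l)) as [_|n]; [|contradiction].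
  apply nth_indep, pidx_lt, idx_lt, h.
Qed.

Lemma prv_nxt l x : NoDup l -> In x l -> prv l (nxt l x) = x.
Proof.
  intros hn h. rewrite (prv_eq l _ x) by (apply nxt_in, h). rewrite (nxt_eq l x x h).
  rewrite idx_nth; [|exact hn| apply nidx_lt, idx_lt, h].
  rewrite pidx_nidx by (apply idx_lt, h). apply nth_idx, h.
Qed.

Lemma nxt_prv l x : NoDup l -> In x l -> nxt l (prv l x) = x.
Proof.
  intros hn h. rewrite (nxt_eq l _ x) by (apply prv_in, h). rewrite (prv_eq l x x h).
  rewrite idx_nth; [|exact hn| apply pidx_lt, idx_lt, h].
  rewrite nidx_pidx by (apply idx_lt, h). apply nth_idx, h.
Qed.

Lemma iter_nxt l d : NoDup l -> forall t i, i + t < length l ->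
  Nat.iter t (nxt l) (nth i l d) = nth (i + t) l d.
Proof.
  intros hn t. induction t as [|t IH]; intros i hi; simpl.
  - rewrite Nat.add_0_r. reflexivity.
  - rewrite IH by lia. rewrite (nxt_eq l _ d) by (apply nth_In; lia).
    rewrite idx_nth by (auto; lia). unfold nidx.
    destruct (Nat.ltb_spec (Datatypes.S (i + t)) (length l)); [|lia].
    f_equal. lia.
Qed.

Lemma nxt_last l d : NoDup l -> 0 < length l -> nxt l (nth (length l - 1) l d) = nth 0 l d.
Proof.
  intros hn hl. rewrite (nxt_eq l _ d) by (apply nth_In; lia).
  rewrite idx_nth by (auto; lia). unfold nidx.
  destruct (Nat.ltb_spec (Datatypes.S (length l - 1)) (length l)); [lia| reflexivity].
Qed.

Lemma cyc_reach l x y : NoDup l -> In x l -> In y l -> exists t, Nat.iter t (nxt l) x = y.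
Proof.
  intros hn hx hy. set (i := idx l x). set (j := idx l y).
  assert (hi : i < length l) by (apply idx_lt, hx). assert (hj : j < length l) by (apply idx_lt, hy).
  rewrite <- (nth_idx l x x hx), <- (nth_idx l y x hy). fold i j.
  destruct (le_lt_dec i j) as [lij|lij].
  - exists (j - i). rewrite iter_nxt by (auto; lia). f_equal. lia.
  - exists (j + (1 + (length l - 1 - i))). rewrite !Nat.iter_add.
    rewrite iter_nxt by (auto; lia). replace (i + (length l - 1 - i)) with (length l - 1) by lia.
    simpl. rewrite nxt_last by (auto; lia). rewrite iter_nxt by (auto; lia). reflexivity.
Qed.


Lemma even_S n : Nat.even (Datatypes.S n) = negb (Nat.even n).
Proof.
  induction n as [|n IH]; [reflexivity|]. change (Nat.even (Datatypes.S (Datatypes.S n))) with (Nat.even n).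
  rewrite IH, Bool.negb_involutive. reflexivity.
Qed.

Definition pp (x : H) : H := if cdec (E (par x)) then par (par (par x)) else par x.

Lemma par_back x : 0 < len x -> exists s, In s S2 /\ par x = mul s x /\ len (par x) = pred (len x).
Proof.
  intro h. destruct (par_spec x h) as [hl [s [hs ex]]]. exists (inv s). split; [apply S2_inv, hs|].
  split; [|exact hl]. rewrite ex at 2. rewrite mul_inv_l. reflexivity.
Qed.

Lemma pp_props x : ~ E x -> 0 < len x ->
  ~ E (pp x) /\ len (pp x) < len x /\ Nat.even (len (pp x)) = negb (Nat.even (len x)) /\
  exists g, len g <= 3 /\ pp x = mul g x.
Proof.
  intros hE hl. unfold pp. destruct (par_back x hl) as [s1 [hs1 [e1 l1]]].
  destruct (cdec (E (par x))) as [hp|hp].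
  - destruct (E_len _ hp) as [i hi]. pose proof (L_ge i).
    destruct (par_back (par x)) as [s2 [hs2 [e2 l2]]]; [lia|].
    destruct (par_back (par (par x))) as [s3 [hs3 [e3 l3]]]; [lia|].
    assert (len (par (par (par x))) = L i - 2) as l4 by lia.
    split; [|split; [|split]].
    + intro h. destruct (E_len _ h) as [j hj]. apply (L_not_m2 i j). lia.
    + lia.
    + rewrite l4. replace (len x) with (Datatypes.S (L i - 2 + 2)) by lia.
      rewrite even_S. replace (L i - 2 + 2) with (Datatypes.S (Datatypes.S (L i - 2))) by lia.
      rewrite Bool.negb_involutive. reflexivity.
    + exists (prod [s3; s2; s1]). split.
      * apply (len_min (prod [s3; s2; s1]) [s3; s2; s1]); [|reflexivity]. intros t [<-|[<-|[<-|[]]]]; assumption.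
      * rewrite e3, e2, e1. simpl. rewrite mone_r, !massoc. reflexivity.
  - split; [exact hp|split; [|split]].
    + lia.
    + rewrite l1. destruct (len x) as [|n]; [lia|]. simpl Init.Nat.pred. rewrite (even_S n), Bool.negb_involutive. reflexivity.
    + exists s1. split; [pose proof (len_gen s1 hs1); lia| exact e1].
Qed.

Definition isCh (v x : H) : bool := if cdec (pp x = v /\ ~ E x /\ 0 < len x) then true else false.

Definition ch (v : H) : list H :=
  nodup heq (filter (isCh v) (map (fun g => mul (inv g) v) (ball 3))).

Lemma ch_spec v x : In x (ch v) <-> pp x = v /\ ~ E x /\ 0 < len x.
Proof.
  unfold ch. rewrite nodup_In, filter_In. unfold isCh. split.
  - intros [_ h]. destruct (cdec _) as [p|_]; [exact p| discriminate].
  - intro h. split.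
    + destruct h as [e0 [hE hl]]. destruct (pp_props x hE hl) as [_ [_ [_ [g [hg eg]]]]].
      apply in_map_iff. exists g. split; [|apply ball_in, hg]. rewrite <- e0, eg, mul_inv_l. reflexivity.
    + destruct (cdec _) as [_|n]; [reflexivity| contradiction].
Qed.

Lemma ch_off v x : In x (ch v) -> exists g, In g (ball 3) /\ x = mul (inv g) v.
Proof.
  unfold ch. rewrite nodup_In, filter_In. intros [h _]. apply in_map_iff in h.
  destruct h as [g [eg hg]]. exists g. auto.
Qed.

Definition cyc (v : H) : list H := v :: ch v.

Lemma cyc_nodup v : NoDup (cyc v).
Proof.
  constructor; [|apply NoDup_nodup]. intro h. apply ch_spec in h. destruct h as [e0 [hE hl]].
  destruct (pp_props v hE hl) as [_ [hlt _]]. rewrite e0 in hlt. lia.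
Qed.

Definition ownA (x : H) : H := if Nat.even (len x) then x else pp x.
Definition ownB (x : H) : H := if Nat.even (len x) then pp x else x.

Lemma cycA_mem v y : ~ E v -> Nat.even (len v) = true -> In y (cyc v) -> ~ E y /\ ownA y = v.
Proof.
  intros hE hev [<-|h].
  - split; [exact hE|]. unfold ownA. rewrite hev. reflexivity.
  - apply ch_spec in h. destruct h as [e0 [hy hl]]. split; [exact hy|].
    destruct (pp_props y hy hl) as [_ [_ [hp _]]]. rewrite e0, hev in hp.
    unfold ownA. destruct (Nat.even (len y)); [discriminate| exact e0].
Qed.

Lemma cycB_mem v y : ~ E v -> Nat.even (len v) = false -> In y (cyc v) -> ~ E y /\ ownB y = v /\ y <> one.
Proof.
  intros hE hev [<-|h].
  - split; [exact hE|]. unfold ownB. rewrite hev. split; [reflexivity|].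
    intro ee. rewrite ee, len_one in hev. discriminate.
  - apply ch_spec in h. destruct h as [e0 [hy hl]]. split; [exact hy|].
    destruct (pp_props y hy hl) as [_ [_ [hp _]]]. rewrite e0, hev in hp.
    unfold ownB. destruct (Nat.even (len y)); [|discriminate]. split; [exact e0|].
    intro ee. rewrite ee, len_one in hl. lia.
Qed.

Lemma ownA_props x : ~ E x -> ~ E (ownA x) /\ Nat.even (len (ownA x)) = true /\ In x (cyc (ownA x)).
Proof.
  intro hE. unfold ownA. destruct (Nat.even (len x)) eqn:ev.
  - split; [exact hE| split; [exact ev| left; reflexivity]].
  - assert (0 < len x) as hl by (destruct (len x); [discriminate| lia]).
    destruct (pp_props x hE hl) as [h1 [_ [h3 _]]]. rewrite ev in h3.
    split; [exact h1| split; [exact h3|]]. right. apply ch_spec. auto.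
Qed.

Lemma ownB_props x : ~ E x -> x <> one -> ~ E (ownB x) /\ Nat.even (len (ownB x)) = false /\ In x (cyc (ownB x)).
Proof.
  intros hE hn. assert (0 < len x) as hl.
  { destruct (len x) eqn:ee; [|lia]. exfalso. apply hn, len0, ee. }
  unfold ownB. destruct (Nat.even (len x)) eqn:ev.
  - destruct (pp_props x hE hl) as [h1 [_ [h3 _]]]. rewrite ev in h3.
    split; [exact h1| split; [exact h3|]]. right. apply ch_spec. auto.
  - split; [exact hE| split; [exact ev| left; reflexivity]].
Qed.


Definition aL : letter := (true, false).
Definition aIL : letter := (true, true).
Definition bL : letter := (false, false).
Definition bIL : letter := (false, true).

Definition pa (x : H) : H :=
  if cdec (E x) then iota (actX aL (getu x)) else nxt (cyc (ownA x)) x.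
Definition pai (x : H) : H :=
  if cdec (E x) then iota (actX aIL (getu x)) else prv (cyc (ownA x)) x.
Definition pb (x : H) : H :=
  if cdec (E x) then (match getu x with [] => one | _ => iota (actX bL (getu x)) end)
  else if heq x one then iota [] else nxt (cyc (ownB x)) x.
Definition pbi (x : H) : H :=
  if cdec (E x) then (match getu x with [] => one | _ => iota (actX bIL (getu x)) end)
  else if heq x one then iota [] else prv (cyc (ownB x)) x.

Lemma pa_E u : RX u -> pa (iota u) = iota (actX aL u).
Proof. intro h. unfold pa. destruct (cdec _) as [_|n]; [rewrite getu_iota by exact h; reflexivity| exfalso; apply n, E_iota, h]. Qed.
Lemma pai_E u : RX u -> pai (iota u) = iota (actX aIL u).
Proof. intro h. unfold pai. destruct (cdec _) as [_|n]; [rewrite getu_iota by exact h; reflexivity| exfalso; apply n, E_iota, h]. Qed.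
Lemma pb_E u : RX u -> u <> [] -> pb (iota u) = iota (actX bL u).
Proof.
  intros h hn. unfold pb. destruct (cdec _) as [_|n]; [|exfalso; apply n, E_iota, h].
  rewrite getu_iota by exact h. destruct u; [contradiction| reflexivity].
Qed.
Lemma pbi_E u : RX u -> u <> [] -> pbi (iota u) = iota (actX bIL u).
Proof.
  intros h hn. unfold pbi. destruct (cdec _) as [_|n]; [|exfalso; apply n, E_iota, h].
  rewrite getu_iota by exact h. destruct u; [contradiction| reflexivity].
Qed.
Lemma pb_nil : pb (iota []) = one.
Proof. unfold pb. destruct (cdec _) as [_|n]; [|exfalso; apply n, E_iota, RX_nil]. rewrite getu_iota by exact RX_nil. reflexivity. Qed.
Lemma pbi_nil : pbi (iota []) = one.
Proof. unfold pbi. destruct (cdec _) as [_|n]; [|exfalso; apply n, E_iota, RX_nil]. rewrite getu_iota by exact RX_nil. reflexivity. Qed.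
Lemma pb_one : pb one = iota [].
Proof. unfold pb. destruct (cdec _) as [h|_]; [exfalso; apply one_notE, h|]. destruct (heq one one); [reflexivity| congruence]. Qed.
Lemma pbi_one : pbi one = iota [].
Proof. unfold pbi. destruct (cdec _) as [h|_]; [exfalso; apply one_notE, h|]. destruct (heq one one); [reflexivity| congruence]. Qed.
Lemma pa_nE x : ~ E x -> pa x = nxt (cyc (ownA x)) x.
Proof. intro h. unfold pa. destruct (cdec _); [contradiction| reflexivity]. Qed.
Lemma pai_nE x : ~ E x -> pai x = prv (cyc (ownA x)) x.
Proof. intro h. unfold pai. destruct (cdec _); [contradiction| reflexivity]. Qed.
Lemma pb_nE x : ~ E x -> x <> one -> pb x = nxt (cyc (ownB x)) x.
Proof. intros h h1. unfold pb. destruct (cdec _); [contradiction|]. destruct (heq x one); [contradiction| reflexivity]. Qed.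
Lemma pbi_nE x : ~ E x -> x <> one -> pbi x = prv (cyc (ownB x)) x.
Proof. intros h h1. unfold pbi. destruct (cdec _); [contradiction|]. destruct (heq x one); [contradiction| reflexivity]. Qed.

Lemma perm_a : is_perm pa pai.
Proof.
  split; intro x; destruct (classic (E x)) as [hx|hx].
  - destruct (getu_spec x hx) as [hr ex]. rewrite ex. set (u := getu x) in *.
    rewrite pai_E by exact hr. rewrite pa_E by (apply actX_RX, hr).
    apply f_equal. apply (actX_inv aIL u hr). reflexivity.
  - destruct (ownA_props x hx) as [h1 [h2 h3]].
    rewrite pai_nE by exact hx. pose proof (prv_in _ _ h3) as hi.
    destruct (cycA_mem _ _ h1 h2 hi) as [hE ho].
    rewrite pa_nE by exact hE. rewrite ho. apply nxt_prv; [apply cyc_nodup| exact h3].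
  - destruct (getu_spec x hx) as [hr ex]. rewrite ex. set (u := getu x) in *.
    rewrite pa_E by exact hr. rewrite pai_E by (apply actX_RX, hr).
    apply f_equal. apply (actX_inv aL u hr). reflexivity.
  - destruct (ownA_props x hx) as [h1 [h2 h3]].
    rewrite pa_nE by exact hx. pose proof (nxt_in _ _ h3) as hi.
    destruct (cycA_mem _ _ h1 h2 hi) as [hE ho].
    rewrite pai_nE by exact hE. rewrite ho. apply prv_nxt; [apply cyc_nodup| exact h3].
Qed.

Lemma perm_b : is_perm pb pbi.
Proof.
  split; intro x; destruct (classic (E x)) as [hx|hx].
  - destruct (getu_spec x hx) as [hr ex]. rewrite ex. set (u := getu x) in *.
    destruct u as [|l u'] eqn:eu.
    + rewrite pbi_nil, pb_one. reflexivity.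
    + rewrite <- eu in *. assert (u <> []) as hn by (rewrite eu; discriminate).
      rewrite pbi_E by assumption.
      rewrite pb_E by (try apply actX_RX; try apply actX_nonnil; auto).
      apply f_equal. apply (actX_inv bIL u hr). intro; contradiction.
  - destruct (heq x one) as [e1|n1].
    + subst x. rewrite pbi_one, pb_nil. reflexivity.
    + destruct (ownB_props x hx n1) as [h1 [h2 h3]].
      rewrite pbi_nE by assumption. pose proof (prv_in _ _ h3) as hi.
      destruct (cycB_mem _ _ h1 h2 hi) as [hE [ho hn]].
      rewrite pb_nE by assumption. rewrite ho. apply nxt_prv; [apply cyc_nodup| exact h3].
  - destruct (getu_spec x hx) as [hr ex]. rewrite ex. set (u := getu x) in *.
    destruct u as [|l u'] eqn:eu.
    + rewrite pb_nil, pbi_one. reflexivity.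
    + rewrite <- eu in *. assert (u <> []) as hn by (rewrite eu; discriminate).
      rewrite pb_E by assumption.
      rewrite pbi_E by (try apply actX_RX; try apply actX_nonnil; auto).
      apply f_equal. apply (actX_inv bL u hr). intro; contradiction.
  - destruct (heq x one) as [e1|n1].
    + subst x. rewrite pb_one, pbi_nil. reflexivity.
    + destruct (ownB_props x hx n1) as [h1 [h2 h3]].
      rewrite pb_nE by assumption. pose proof (nxt_in _ _ h3) as hi.
      destruct (cycB_mem _ _ h1 h2 hi) as [hE [ho hn]].
      rewrite pbi_nE by assumption. rewrite ho. apply prv_nxt; [apply cyc_nodup| exact h3].
Qed.


Definition aw (w : word) (x : H) : H := act_word pa pai pb pbi w x.
Definition reach (x y : H) : Prop := exists w, aw w x = y.

Lemma aw_app w1 w2 x : aw (w1 ++ w2) x = aw w1 (aw w2 x).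
Proof. unfold aw. induction w1 as [|l w1 IH]; simpl; [reflexivity| rewrite IH; reflexivity]. Qed.

Lemma reach_refl x : reach x x.
Proof. exists []. reflexivity. Qed.

Lemma reach_trans x y z : reach x y -> reach y z -> reach x z.
Proof. intros [w1 h1] [w2 h2]. exists (w2 ++ w1). rewrite aw_app, h1, h2. reflexivity. Qed.

Lemma reach_letter l x : reach x (act_letter pa pai pb pbi l x).
Proof. exists [l]. reflexivity. Qed.

Lemma iter_aw l t x : Nat.iter t (act_letter pa pai pb pbi l) x = aw (repeat l t) x.
Proof. induction t as [|t IH]; simpl; [reflexivity| rewrite IH; reflexivity]. Qed.

Lemma cycA_reach v x y : ~ E v -> Nat.even (len v) = true -> In x (cyc v) -> In y (cyc v) -> reach x y.
Proof.
  intros hE hev hx hy. destruct (cyc_reach _ _ _ (cyc_nodup v) hx hy) as [t ht].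
  assert (forall t, Nat.iter t pa x = Nat.iter t (nxt (cyc v)) x /\ In (Nat.iter t pa x) (cyc v)) as K.
  { intro t0. induction t0 as [|t0 [IH1 IH2]]; [split; [reflexivity| exact hx]|]. rewrite !Nat.iter_succ.
    destruct (cycA_mem _ _ hE hev IH2) as [hz ho]. rewrite (pa_nE _ hz), ho. split.
    - rewrite IH1; reflexivity.
    - apply nxt_in, IH2. }
  exists (repeat aL t). rewrite <- iter_aw. destruct (K t) as [K1 _]. rewrite <- ht. exact K1.
Qed.

Lemma cycB_reach v x y : ~ E v -> Nat.even (len v) = false -> In x (cyc v) -> In y (cyc v) -> reach x y.
Proof.
  intros hE hev hx hy. destruct (cyc_reach _ _ _ (cyc_nodup v) hx hy) as [t ht].
  assert (forall t, Nat.iter t pb x = Nat.iter t (nxt (cyc v)) x /\ In (Nat.iter t pb x) (cyc v)) as K.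
  { intro t0. induction t0 as [|t0 [IH1 IH2]]; [split; [reflexivity| exact hx]|]. rewrite !Nat.iter_succ.
    destruct (cycB_mem _ _ hE hev IH2) as [hz [ho hn]]. rewrite (pb_nE _ hz hn), ho. split.
    - rewrite IH1; reflexivity.
    - apply nxt_in, IH2. }
  exists (repeat bL t). rewrite <- iter_aw. destruct (K t) as [K1 _]. rewrite <- ht. exact K1.
Qed.

Lemma tree_reach n : forall x, len x = n -> ~ E x -> reach x one /\ reach one x.
Proof.
  induction n as [n IH] using lt_wf_ind. intros x hl hE.
  destruct n as [|n].
  - rewrite (len0 x hl). split; apply reach_refl.
  - assert (0 < len x) as hp by lia.
    destruct (pp_props x hE hp) as [h1 [h2 _]].
    assert (In x (cyc (pp x))) as hx by (right; apply ch_spec; auto).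
    assert (In (pp x) (cyc (pp x))) as hv by (left; reflexivity).
    assert (reach x (pp x) /\ reach (pp x) x) as [r1 r2].
    { destruct (Nat.even (len (pp x))) eqn:ev.
      - split; eapply cycA_reach; eauto.
      - split; eapply cycB_reach; eauto. }
    destruct (IH (len (pp x)) ltac:(lia) (pp x) eq_refl h1) as [r3 r4].
    split; eapply reach_trans; eauto.
Qed.

Lemma letter_E l u : RX u -> (u = [] -> fst l = true) ->
  act_letter pa pai pb pbi l (iota u) = iota (actX l u).
Proof.
  intros h hb. destruct l as [[|] [|]]; simpl.
  - apply pai_E, h.
  - apply pa_E, h.
  - apply pbi_E; [exact h| intro ee; specialize (hb ee); discriminate].
  - apply pb_E; [exact h| intro ee; specialize (hb ee); discriminate].
Qed.

Lemma E_reach u : RX u -> reach (iota u) (iota []) /\ reach (iota []) (iota u).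
Proof.
  induction u as [|l u IH]; intro h; [split; apply reach_refl|].
  pose proof (RX_tail _ _ h) as ht. destruct (IH ht) as [r1 r2].
  assert (reach (iota (l :: u)) (iota u)).
  { exists [linv l]. unfold aw. cbn [act_word].
    rewrite letter_E; [| exact h| discriminate]. rewrite actX_tail. reflexivity. }
  assert (reach (iota u) (iota (l :: u))).
  { exists [l]. unfold aw. cbn [act_word].
    rewrite letter_E; [| exact ht|].
    - rewrite actX_build by exact h. reflexivity.
    - intro ee. subst u. destruct h as [_ h2]. exact h2. }
  split; eapply reach_trans; eauto.
Qed.

Lemma all_reach x : reach x one /\ reach one x.
Proof.
  destruct (classic (E x)) as [hx|hx].
  - destruct hx as [u [hr ->]]. destruct (E_reach u hr) as [r1 r2].
    assert (reach (iota []) one) by (exists [bL]; unfold aw; simpl; apply pb_nil).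
    assert (reach one (iota [])) by (exists [bL]; unfold aw; simpl; apply pb_one).
    split; eapply reach_trans; eauto.
  - eapply tree_reach; eauto.
Qed.

Lemma transitive_ok : transitive_action pa pai pb pbi.
Proof.
  intros x y. destruct (all_reach x) as [r1 _]. destruct (all_reach y) as [_ r2].
  destruct (reach_trans _ _ _ r1 r2) as [w hw]. exists w. exact hw.
Qed.

Lemma walk v x0 : x0 <> [] -> RX (v ++ x0) -> aw v (iota x0) = iota (v ++ x0).
Proof.
  intro hn. induction v as [|l v IH]; intro h; [reflexivity|].
  simpl in h. pose proof (RX_tail _ _ h) as ht. unfold aw in *. simpl. rewrite IH by exact ht.
  rewrite letter_E; [| exact ht| intro ee; destruct v; simpl in ee; [contradiction| discriminate]].
  rewrite actX_build by exact h. reflexivity.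
Qed.

Lemma reduced_snoc w c d : reduced w -> (w = [] \/ ~ inverse_letters (last w d) c) -> reduced (w ++ [c]).
Proof.
  induction w as [|l w IH]; intros h hc; [exact I|].
  destruct w as [|l2 w2].
  - simpl. split; [|exact I]. destruct hc as [hc|hc]; [discriminate| exact hc].
  - simpl in h. destruct h as [h1 h2]. change ((l :: l2 :: w2) ++ [c]) with (l :: ((l2 :: w2) ++ [c])).
    simpl. split; [exact h1|]. apply IH; [exact h2|]. right. destruct hc as [hc|hc]; [discriminate| exact hc].
Qed.

Lemma endA_snoc w c : fst c = true -> endA (w ++ [c]).
Proof.
  intro hc. unfold endA. destruct (w ++ [c]) as [|z zs] eqn:ez; [destruct w; discriminate|].
  rewrite <- ez, last_last. exact hc.
Qed.

Lemma faithful_ok : faithful_action pa pai pb pbi.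
Proof.
  intros w hr hn.
  set (x0 := if leq_dec (last w aL) aL then [aL] else [aIL]).
  assert (exists c, x0 = [c] /\ fst c = true /\ ~ inverse_letters (last w aL) c) as [c [ec [fc ic]]].
  { unfold x0. destruct (leq_dec (last w aL) aL) as [el|nl].
    - exists aL. split; [reflexivity| split; [reflexivity|]]. rewrite el, inverse_letters_iff. discriminate.
    - exists aIL. split; [reflexivity| split; [reflexivity|]]. rewrite inverse_letters_iff. intro ee.
      apply nl. rewrite <- (linv_linv (last w aL)), <- ee. reflexivity. }
  assert (RX (w ++ x0)) as hR.
  { rewrite ec. split; [apply reduced_snoc with (d := aL); auto| apply endA_snoc, fc]. }
  exists (iota x0). fold (aw w (iota x0)). rewrite walk; [| rewrite ec; discriminate| exact hR].
  intro ee. apply iota_inj in ee. assert (length (w ++ x0) = length x0) as hl by (rewrite ee; reflexivity).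
  rewrite length_app in hl. destruct w; [contradiction| simpl in hl; lia].
Qed.


Lemma real_zero (m : R) : (0 <= m)%R -> (forall k, (INR (Datatypes.S k) * m <= 1)%R) -> m = 0%R.
Proof.
  intros h0 hk. destruct (Rle_lt_or_eq_dec 0 m h0) as [hp|he]; [|symmetry; exact he].
  exfalso. destruct (INR_unbounded (1 / m)) as [n hn]. specialize (hk n). rewrite S_INR in hk.
  assert (INR n * m > 1)%R.
  { apply (Rmult_gt_compat_r m) in hn; [|exact hp]. unfold Rdiv in hn.
    rewrite Rmult_assoc, Rinv_l, Rmult_1_r in hn by lra. lra. }
  lra.
Qed.

Lemma rcancel g x y : mul x g = mul y g -> x = y.
Proof.
  intro h. rewrite <- (mone_r x), <- (mone_r y), <- (minv_r g), <- !massoc, h. reflexivity.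
Qed.

Variable mu : (H -> Prop) -> R.
Hypothesis Hmu : H_invariant_mean mul mu.

Lemma mu_ext A B : (forall x, A x <-> B x) -> mu A = mu B.
Proof. apply (proj1 (proj1 Hmu)). Qed.
Lemma mu_add A B : set_disjoint A B -> mu (set_union A B) = (mu A + mu B)%R.
Proof. apply (proj2 (proj2 (proj2 (proj1 Hmu)))). Qed.
Lemma mu_rng A : (0 <= mu A <= 1)%R.
Proof. apply (proj1 (proj2 (proj1 Hmu))). Qed.
Lemma mu_tr g A : mu (image (mul g) A) = mu A.
Proof. apply (proj2 Hmu). Qed.

Lemma mu_empty : mu (fun _ => False) = 0%R.
Proof.
  assert (mu (set_union (fun _ : H => False) (fun _ => False)) = (mu (fun _ => False) + mu (fun _ => False))%R).
  { apply mu_add. intros x [[] _]. }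
  rewrite (mu_ext _ (fun _ => False)) in H0 by (intro x; unfold set_union; tauto). lra.
Qed.

Lemma mu_empty' A : (forall x, ~ A x) -> mu A = 0%R.
Proof. intro h. rewrite (mu_ext A (fun _ => False)) by (intro x; split; [apply h| intros []]). apply mu_empty. Qed.

Lemma mu_mono A B : (forall x, A x -> B x) -> (mu A <= mu B)%R.
Proof.
  intro h. rewrite (mu_ext B (set_union A (fun x => B x /\ ~ A x))).
  - rewrite mu_add by (intros x [h1 [_ h2]]; contradiction). pose proof (mu_rng (fun x => B x /\ ~ A x)). lra.
  - intro x. unfold set_union. split; [intro hb; destruct (classic (A x)); tauto| intros [ha|[hb _]]; auto].
Qed.

Lemma mu_union_le A B : (mu (set_union A B) <= mu A + mu B)%R.
Proof.
  rewrite (mu_ext (set_union A B) (set_union A (fun x => B x /\ ~ A x))).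
  - rewrite mu_add by (intros x [h1 [_ h2]]; contradiction).
    pose proof (mu_mono (fun x => B x /\ ~ A x) B (fun x h => proj1 h)). lra.
  - intro x. unfold set_union. split; [intros [ha|hb]; [auto| destruct (classic (A x)); tauto]| intros [ha|[hb _]]; auto].
Qed.

Definition null (A : H -> Prop) : Prop := mu A = 0%R.

Lemma null_sub A B : (forall x, A x -> B x) -> null B -> null A.
Proof. intros h hb. unfold null in *. pose proof (mu_mono A B h). pose proof (mu_rng A). lra. Qed.

Lemma null_union A B : null A -> null B -> null (set_union A B).
Proof.
  intros ha hb. unfold null in *. pose proof (mu_union_le A B). pose proof (mu_rng (set_union A B)). lra.
Qed.

Fixpoint pdisj (A : H -> Prop) (gs : list H) : Prop :=
  match gs with
  | [] => True
  | g :: gs' => (forall g', In g' gs' -> set_disjoint (image (mul g) A) (image (mul g') A)) /\ pdisj A gs'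
  end.

Definition U (A : H -> Prop) (gs : list H) : H -> Prop := fun x => exists g, In g gs /\ image (mul g) A x.

Lemma U_mu A gs : pdisj A gs -> mu (U A gs) = (INR (length gs) * mu A)%R.
Proof.
  induction gs as [|g gs IH]; intro h.
  - simpl. rewrite Rmult_0_l. apply mu_empty'. intros x [g [[] _]].
  - destruct h as [h1 h2]. rewrite (mu_ext _ (set_union (image (mul g) A) (U A gs))).
    + rewrite mu_add, IH, mu_tr by (try exact h2; intros x [ha [g' [hg' hb]]]; exact (h1 g' hg' x (conj ha hb))).
      simpl length. rewrite S_INR. lra.
    + intro x. unfold U, set_union. split.
      * intros [g' [[<-|hg] hx]]; [left; exact hx| right; exists g'; auto].
      * intros [hx|[g' [hg hx]]]; [exists g; split; [left; reflexivity| exact hx]| exists g'; split; [right; exact hg| exact hx]].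
Qed.

Lemma null_of_translates A : (forall k, exists gs, length gs = Datatypes.S k /\ pdisj A gs) -> null A.
Proof.
  intro h. apply real_zero; [apply mu_rng|]. intro k. destruct (h k) as [gs [hl hp]].
  rewrite <- hl, <- U_mu by exact hp. apply mu_rng.
Qed.

Lemma pdisj_of A gs : NoDup gs ->
  (forall g g', In g gs -> In g' gs -> g <> g' -> set_disjoint (image (mul g) A) (image (mul g') A)) -> pdisj A gs.
Proof.
  induction 1 as [|g gs hg hn IH]; intro h; simpl; [exact I|]. split.
  - intros g' hg'. apply h; [left; reflexivity| right; exact hg'| intro ee; subst; contradiction].
  - apply IH. intros a b ha hb. apply h; right; assumption.
Qed.

Definition sing (h : H) : H -> Prop := fun x => x = h.

Lemma null_sing h : null (sing h).
Proof.
  apply null_of_translates. intro k. destruct (distinct_list (Datatypes.S k)) as [gs [hl hn]].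
  exists gs. split; [exact hl|]. apply pdisj_of; [exact hn|]. intros g g' _ _ hne x [[y [hy ey]] [y' [hy' ey']]].
  unfold sing in *. subst. apply hne. eapply rcancel. exact ey'.
Qed.

Definition Efin (M : nat) : H -> Prop := fun h => exists i, i < M /\ h = e i.
Definition Et (M : nat) : H -> Prop := fun h => exists i, M <= i /\ h = e i.

Lemma null_Efin M : null (Efin M).
Proof.
  induction M as [|M IH].
  - apply (null_sub _ (fun _ => False)); [intros x [i [hi _]]; lia| apply mu_empty].
  - apply (null_sub _ (set_union (Efin M) (sing (e M)))).
    + intros x [i [hi ex]]. unfold set_union, sing, Efin. destruct (Nat.eq_dec i M); [subst; right; reflexivity| left; exists i; split; [lia| exact ex]].
    + apply null_union; [exact IH| apply null_sing].
Qed.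

Fixpoint maxlen (gs : list H) : nat := match gs with [] => 0 | g :: gs' => Nat.max (len g) (maxlen gs') end.
Lemma maxlen_ge g gs : In g gs -> len g <= maxlen gs.
Proof. induction gs as [|g' gs IH]; simpl; [intros []|]. intros [<-|h]; [lia| specialize (IH h); lia]. Qed.

Lemma len_inv_eq x : len (inv x) = len x.
Proof. pose proof (len_inv x). pose proof (len_inv (inv x)). rewrite inv_inv in H1. lia. Qed.

Lemma Et_disj gs : NoDup gs -> pdisj (Et (Datatypes.S (maxlen gs))) gs.
Proof.
  intro hn. apply pdisj_of; [exact hn|]. intros g g' hg hg' hne x [[y [[i [hi ->]] ey]] [y' [[j [hj ->]] ey']]].
  pose proof (maxlen_ge g gs hg). pose proof (maxlen_ge g' gs hg').
  rewrite ey in ey'.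
  destruct (Nat.eq_dec i j) as [->|hij].
  - apply hne. eapply rcancel. exact ey'.
  - assert (e j = mul (inv g') (mul g (e i))) as e1 by (rewrite ey', mul_inv_l; reflexivity).
    assert (e i = mul (inv g) (mul g' (e j))) as e2 by (rewrite <- ey', mul_inv_l; reflexivity).
    assert (L j <= maxlen gs + maxlen gs + L i).
    { rewrite <- !len_e, e1. pose proof (len_mul (inv g') (mul g (e i))). pose proof (len_mul g (e i)).
      rewrite len_inv_eq in H2. lia. }
    assert (L i <= maxlen gs + maxlen gs + L j).
    { rewrite <- !len_e. rewrite e2 at 1. pose proof (len_mul (inv g) (mul g' (e j))). pose proof (len_mul g' (e j)).
      rewrite len_inv_eq in H3. rewrite !len_e in *. lia. }
    destruct (le_lt_dec i j) as [l|l].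
    + pose proof (L_gap i j ltac:(lia)). lia.
    + pose proof (L_gap j i l). lia.
Qed.

Definition Eall : H -> Prop := fun h => exists i, h = e i.

Lemma null_Eall : null Eall.
Proof.
  apply real_zero; [apply mu_rng|]. intro k. destruct (distinct_list (Datatypes.S k)) as [gs [hl hn]].
  set (M := Datatypes.S (maxlen gs)).
  pose proof (U_mu _ gs (Et_disj gs hn)) as hU. fold M in hU. rewrite hl in hU.
  pose proof (mu_rng (U (Et M) gs)).
  assert (mu Eall <= mu (Et M))%R.
  { eapply Rle_trans; [apply (mu_mono _ (set_union (Efin M) (Et M)))|].
    - intros x [i ->]. unfold set_union. destruct (le_lt_dec M i); [right| left]; exists i; auto.
    - pose proof (mu_union_le (Efin M) (Et M)). pose proof (null_Efin M). unfold null in *. lra. }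
  pose proof (pos_INR (Datatypes.S k)). pose proof (mu_rng Eall).
  apply Rmult_le_compat_l with (r := INR (Datatypes.S k)) in H1; [|lra]. lra.
Qed.

Lemma null_E : null E.
Proof. apply (null_sub _ Eall); [intros x [u [_ ->]]; exists (code u); reflexivity| apply null_Eall]. Qed.


Lemma pw (f : H -> H) (finj : forall x y, f x = f y -> x = y) G :
  forall B, (forall x, B x -> exists g, In g G /\ f x = mul g x) -> mu (image f B) = mu B.
Proof.
  induction G as [|g G IH]; intros B hB.
  - rewrite !mu_empty'; [reflexivity| |].
    + intros x hx. destruct (hB x hx) as [g [[] _]].
    + intros y [x [hx _]]. destruct (hB x hx) as [g [[] _]].
  - set (B1 := fun x => B x /\ f x = mul g x). set (B2 := fun x => B x /\ f x <> mul g x).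
    assert (d12 : set_disjoint B1 B2) by (intros x [[_ h1] [_ h2]]; contradiction).
    rewrite (mu_ext B (set_union B1 B2)) by (intro x; unfold set_union, B1, B2; split;
      [intro hb; destruct (classic (f x = mul g x)); tauto| intros [[]|[]]; assumption]).
    rewrite (mu_ext (image f B) (set_union (image (mul g) B1) (image f B2))).
    + rewrite !mu_add; [| exact d12|].
      * rewrite mu_tr, IH; [reflexivity|]. intros x [hx hne]. destruct (hB x hx) as [g' [[<-|hg'] eg']]; [contradiction|].
        exists g'; auto.
      * intros y [[x [hx ->]] [x' [hx' ex']]]. unfold B1, B2 in *. destruct hx as [hx e1], hx' as [hx' e2].
        rewrite <- e1 in ex'. apply finj in ex'. subst. contradiction.
    + intro y. unfold image, set_union, B1, B2. split.
      * intros [x [hx ->]]. destruct (classic (f x = mul g x)) as [ee|ne].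
        -- left. exists x. rewrite ee. auto.
        -- right. exists x. auto.
      * intros [[x [[hx ee] ->]]|[x [[hx _] ->]]]; exists x; [rewrite ee|]; auto.
Qed.

Lemma inv_map (f : H -> H) (finj : forall x y, f x = f y -> x = y) (W : H -> Prop) G :
  null W -> null (image f W) -> (forall x, ~ W x -> exists g, In g G /\ f x = mul g x) ->
  forall A, mu (image f A) = mu A.
Proof.
  intros hW hfW hb A.
  set (A1 := fun x => A x /\ ~ W x). set (A2 := fun x => A x /\ W x).
  assert (d12 : set_disjoint A1 A2) by (intros x [[_ h1] [_ h2]]; contradiction).
  assert (null A2) by (apply (null_sub _ W); [intros x []; auto| exact hW]).
  assert (null (image f A2)) by (apply (null_sub _ (image f W)); [intros y [x [[_ hx] ->]]; exists x; auto| exact hfW]).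
  rewrite (mu_ext A (set_union A1 A2)) by (intro x; unfold set_union, A1, A2; split;
      [intro ha; destruct (classic (W x)); tauto| intros [[]|[]]; assumption]).
  rewrite (mu_ext (image f A) (set_union (image f A1) (image f A2))).
  - rewrite !mu_add; [| exact d12|].
    + rewrite (pw f finj G A1) by (intros x [_ hx]; apply hb, hx). unfold null in *. lra.
    + intros y [[x [hx ->]] [x' [hx' ex']]]. apply finj in ex'. subst. destruct hx, hx'; contradiction.
  - intro y. unfold image, set_union, A1, A2. split.
    + intros [x [hx ->]]. destruct (classic (W x)); [right| left]; exists x; auto.
    + intros [[x [[hx _] ->]]|[x [[hx _] ->]]]; exists x; auto.
Qed.

Definition Off : list H := one :: map inv (ball 3).
Definition T : list H := flat_map (fun o2 => map (fun o1 => mul o2 (inv o1)) Off) Off.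

Lemma cyc_off v y : In y (cyc v) -> exists o, In o Off /\ y = mul o v.
Proof.
  intros [<-|h]. - exists one. split; [left; reflexivity| rewrite mone_l; reflexivity].
  - destruct (ch_off v y h) as [g [hg ->]]. exists (inv g). split; [right; apply in_map, hg| reflexivity].
Qed.

Lemma T_ok v x y : In x (cyc v) -> In y (cyc v) -> exists g, In g T /\ y = mul g x.
Proof.
  intros hx hy. destruct (cyc_off v x hx) as [o1 [h1 ->]]. destruct (cyc_off v y hy) as [o2 [h2 ->]].
  exists (mul o2 (inv o1)). split.
  - unfold T. apply in_flat_map. exists o2. split; [exact h2| apply in_map_iff; exists o1; auto].
  - rewrite massoc, mul_inv_l. reflexivity.
Qed.

Definition W0 : H -> Prop := set_union E (sing one).

Lemma null_W0 : null W0.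
Proof. apply null_union; [apply null_E| apply null_sing]. Qed.

Lemma perm_inj (f g : H -> H) : is_perm f g -> forall x y, f x = f y -> x = y.
Proof. intros [_ h] x y ee. rewrite <- (h x), <- (h y), ee. reflexivity. Qed.

Lemma letter_inv l : forall A, mu (image (act_letter pa pai pb pbi l) A) = mu A.
Proof.
  set (f := act_letter pa pai pb pbi l).
  assert (finj : forall x y, f x = f y -> x = y).
  { unfold f. destruct l as [[|] [|]]; simpl.
    - apply (perm_inj pai pa). destruct perm_a as [h1 h2]. split; assumption.
    - apply (perm_inj pa pai perm_a).
    - apply (perm_inj pbi pb). destruct perm_b as [h1 h2]. split; assumption.
    - apply (perm_inj pb pbi perm_b). }
  assert (hE : forall x, E x -> E (f x) \/ f x = one).
  { intros x hx. destruct (getu_spec x hx) as [hr ex]. rewrite ex. set (u := getu x) in *.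
    unfold f. destruct l as [[|] [|]]; simpl.
    - left. rewrite pai_E by exact hr. apply E_iota, actX_RX, hr.
    - left. rewrite pa_E by exact hr. apply E_iota, actX_RX, hr.
    - destruct u as [|l' u'] eqn:eu; [right; apply pbi_nil|]. rewrite <- eu in *.
      left. rewrite pbi_E by (auto; rewrite eu; discriminate). apply E_iota, actX_RX, hr.
    - destruct u as [|l' u'] eqn:eu; [right; apply pb_nil|]. rewrite <- eu in *.
      left. rewrite pb_E by (auto; rewrite eu; discriminate). apply E_iota, actX_RX, hr. }
  assert (hb : forall x, ~ W0 x -> exists g, In g T /\ f x = mul g x).
  { intros x hx. assert (~ E x /\ x <> one) as [hE' hn] by (unfold W0, set_union, sing in hx; tauto).
    unfold f. destruct l as [[|] [|]]; simpl.
    - destruct (ownA_props x hE') as [_ [_ h3]]. rewrite pai_nE by exact hE'. apply (T_ok _ _ _ h3), prv_in, h3.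
    - destruct (ownA_props x hE') as [_ [_ h3]]. rewrite pa_nE by exact hE'. apply (T_ok _ _ _ h3), nxt_in, h3.
    - destruct (ownB_props x hE' hn) as [_ [_ h3]]. rewrite pbi_nE by assumption. apply (T_ok _ _ _ h3), prv_in, h3.
    - destruct (ownB_props x hE' hn) as [_ [_ h3]]. rewrite pb_nE by assumption. apply (T_ok _ _ _ h3), nxt_in, h3. }
  apply (inv_map f finj W0 T null_W0); [|exact hb].
  apply (null_sub _ (set_union W0 (sing (f one)))); [|apply null_union; [exact null_W0| apply null_sing]].
  intros y [x [hx ->]]. unfold W0, set_union, sing in *. destruct hx as [hx| ->]; [|right; reflexivity].
  destruct (hE x hx); tauto.
Qed.

Lemma F2_ok : F2_invariant pa pai pb pbi mu.
Proof.
  intro w. induction w as [|l w IH]; intro A.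
  - apply mu_ext. intro x. unfold image. simpl. split; [intros [y [hy ->]]; exact hy| intro hx; exists x; auto].
  - rewrite <- (IH A), <- (letter_inv l (image (act_word pa pai pb pbi w) A)).
    apply mu_ext. intro y. unfold image. simpl. split.
    + intros [x [hx ->]]. exists (act_word pa pai pb pbi w x). split; [exists x; auto| reflexivity].
    + intros [z [[x [hx ->]] ->]]. exists x; auto.
Qed.

End Main.

Theorem theorem6p1 (H : Type) (mul : H -> H -> H) (one : H) (inv : H -> H)
  (HG : is_group mul one inv) (Hinf : infinite_type H)
  (Hfg : finitely_generated mul one inv) (Ham : amenable mul) :
  exists pa pai pb pbi : H -> H,
    is_perm pa pai /\ is_perm pb pbi /\
    faithful_action pa pai pb pbi /\ transitive_action pa pai pb pbi /\
    (forall mu : (H -> Prop) -> R, H_invariant_mean mul mu -> F2_invariant pa pai pb pbi mu).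
Proof.
  destruct Hfg as [Sg hS].
  exists (pa mul one inv HG Sg hS Hinf), (pai mul one inv HG Sg hS Hinf),
    (pb mul one inv HG Sg hS Hinf), (pbi mul one inv HG Sg hS Hinf).
  split; [apply perm_a|]. split; [apply perm_b|]. split; [apply faithful_ok|].
  split; [apply transitive_ok|]. intros mu hmu. apply F2_ok, hmu.
Qed.
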